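(* Let $T_1,T_2$ be tables joined on column $J$ with frequencies $a_v,b_v$ ($v\in\mathcal U$). Fix UBS parameters $(p_1,q_1)$ with $0<p_1,q_1\le1$ for $T_1$, and fix an effective sampling rate $\epsilon_2\in(0,1]$ for $T_2$ with $\epsilon_2\le p_1$. Over all UBS parameters $(p_2,q_2)$ for $T_2$ with $p_2\in[\epsilon_2,1]$ and $q_2=\epsilon_2/p_2$, the variance of $\hat J_{\mathrm{count}}=\frac{1}{\min\{p_1,p_2\}q_1q_2}|S_1\bowtie_J S_2|$ (where $S_1=\mathrm{UBS}_{p_1,q_1}(T_1,J)$, $S_2=\mathrm{UBS}_{p_2,q_2}(T_2,J)$) is minimized when $p_2=p_1$ and $q_2=\epsilon_2/p_1$.
   Context: $T_1,T_2$ are finite multisets of tuples with a join attribute $J$ taking values in a finite set $\mathcal U$; $a_v$ (resp. $b_v$) is the number of tuples of $T_1$ (resp. $T_2$) with $J$-value $v$. $S_1\bowtie_J S_2$ is the set of pairs $(t_1,t_2)\in S_1\times S_2$ with $t_1.J=t_2.J$. $\mathrm{UBS}_{p,q}(T,J)$: given a hash function $h:\mathcal U\to[0,1]$, each tuple $t\in T$ with $h(t.J)<p$ is included independently with probability $q$; others are excluded. The values $h(v)$ are independent uniform on $[0,1]$, the same $h$ is used for both tables, and the Bernoulli coins are independent across all tuples and independent of $h$. The effective sampling rate of $\mathrm{UBS}_{p,q}$ is $pq$. *)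

(* Defs.v *)
From HB Require Import structures.
From mathcomp Require Import all_boot all_order all_algebra.
Set Implicit Arguments. Unset Strict Implicit. Unset Printing Implicit Defensive.
Import Order.TTheory GRing.Theory Num.Theory.
Local Open Scope ring_scope.

(* Tables: T1, T2 are finite types of tuple identities (so duplicates in a
   multiset are distinct elements); key1/key2 give the join attribute J with
   values in the finite set U.  a_v = #|{t : T1 | key1 t = v}|, likewise b_v. *)

(* Hash values: the hash h(v) ~ Unif[0,1] enters UBS_{p1,q1} and
   UBS_{p2,q2} only through the events h(v) < p1, h(v) < p2.  We use the exact
   push-forward of h(v) under rounding down to the grid {0, min p1 p2, max p1 p2}:
   grid point k has value hval k and probability hweight k. *)
Definition hval (R : realFieldType) (p1 p2 : R) (k : 'I_3) : R :=
  nth 0 [:: 0; Num.min p1 p2; Num.max p1 p2] k.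
Definition hweight (R : realFieldType) (p1 p2 : R) (k : 'I_3) : R :=
  nth 0 [:: Num.min p1 p2; Num.max p1 p2 - Num.min p1 p2; 1 - Num.max p1 p2] k.
Definition coinw (R : realFieldType) (q : R) (b : bool) : R :=
  if b then q else 1 - q.

(* Outcomes: hash level per join value, Bernoulli coin per tuple of T1 and T2. *)
Definition Omega (U T1 T2 : finType) : finType :=
  ({ffun U -> 'I_3} * {ffun T1 -> bool} * {ffun T2 -> bool})%type.

Definition prob (R : realFieldType) (U T1 T2 : finType)
  (p1 q1 p2 q2 : R) (w : Omega U T1 T2) : R :=
  (\prod_(v : U) hweight p1 p2 (w.1.1 v)) *
  (\prod_(t : T1) coinw q1 (w.1.2 t)) * (\prod_(t : T2) coinw q2 (w.2 t)).

Definition S1 (R : realFieldType) (U T1 T2 : finType) (key1 : T1 -> U)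
  (p1 p2 : R) (w : Omega U T1 T2) : {set T1} :=
  [set t | (hval p1 p2 (w.1.1 (key1 t)) < p1) && w.1.2 t].
Definition S2 (R : realFieldType) (U T1 T2 : finType) (key2 : T2 -> U)
  (p1 p2 : R) (w : Omega U T1 T2) : {set T2} :=
  [set t | (hval p1 p2 (w.1.1 (key2 t)) < p2) && w.2 t].

Definition join_size (R : realFieldType) (U T1 T2 : finType)
  (key1 : T1 -> U) (key2 : T2 -> U) (p1 p2 : R) (w : Omega U T1 T2) : nat :=
  #|[set x : T1 * T2 | [&& x.1 \in S1 key1 p1 p2 w, x.2 \in S2 key2 p1 p2 w
                        & key1 x.1 == key2 x.2]]|.

Definition Jcount (R : realFieldType) (U T1 T2 : finType)
  (key1 : T1 -> U) (key2 : T2 -> U) (p1 q1 p2 q2 : R) (w : Omega U T1 T2) : R :=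
  (join_size key1 key2 p1 p2 w)%:R / (Num.min p1 p2 * q1 * q2).

Definition Expect (R : realFieldType) (U T1 T2 : finType)
  (p1 q1 p2 q2 : R) (X : Omega U T1 T2 -> R) : R :=
  \sum_(w : Omega U T1 T2) prob p1 q1 p2 q2 w * X w.

Definition Var_Jcount (R : realFieldType) (U T1 T2 : finType)
  (key1 : T1 -> U) (key2 : T2 -> U) (p1 q1 p2 q2 : R) : R :=
  let X := Jcount key1 key2 p1 q1 p2 q2 in
  let m := Expect p1 q1 p2 q2 X in
  Expect p1 q1 p2 q2 (fun w => (X w - m) ^+ 2).

(* Main.v *)
Require Import Defs.
From HB Require Import structures.
From mathcomp Require Import all_boot all_order all_algebra.
From mathcomp Require Import ring lra.
Import Order.TTheory GRing.Theory Num.Theory.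
Set Implicit Arguments. Unset Strict Implicit. Unset Printing Implicit Defensive.
Local Open Scope ring_scope.

Definition PF (R : realFieldType) (U T1 T2 : finType) (g : U -> 'I_3 -> R)
  (h1 : T1 -> bool -> R) (h2 : T2 -> bool -> R) (w : Omega U T1 T2) : R :=
  (\prod_x g x (w.1.1 x)) * (\prod_t h1 t (w.1.2 t)) * (\prod_t h2 t (w.2 t)).

Lemma Expect_PF (R : realFieldType) (U T1 T2 : finType) (p1 q1 p2 q2 : R)
  (g : U -> 'I_3 -> R) (h1 : T1 -> bool -> R) (h2 : T2 -> bool -> R) :
  Expect p1 q1 p2 q2 (PF g h1 h2) =
  (\prod_x \sum_k hweight p1 p2 k * g x k) *
  (\prod_t \sum_b coinw q1 b * h1 t b) * (\prod_t \sum_b coinw q2 b * h2 t b).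
Proof.
rewrite !bigA_distr_bigA /=.
rewrite big_distrl /=.
under eq_bigr do rewrite big_distrr /=.
rewrite big_distrl /=.
under eq_bigr do rewrite big_distrl /=.
under eq_bigr do under eq_bigr do rewrite big_distrr /=.
rewrite pair_bigA /= pair_bigA /= /Expect /prob /PF.
apply: eq_bigr => [[[f g'] h]] _ /=.
rewrite !big_split /=; ring.
Qed.


Definition I1 (R : realFieldType) (U T1 T2 : finType) (key1 : T1 -> U)
  (p1 p2 : R) (t : T1) (w : Omega U T1 T2) : R :=
  ((t \in S1 key1 p1 p2 w) : nat)%:R.
Definition I2 (R : realFieldType) (U T1 T2 : finType) (key2 : T2 -> U)
  (p1 p2 : R) (t : T2) (w : Omega U T1 T2) : R :=
  ((t \in S2 key2 p1 p2 w) : nat)%:R.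

Definition G1 (R : realFieldType) (U : finType) (p1 p2 : R) (v x : U) (k : 'I_3) : R :=
  if x == v then ((hval p1 p2 k < p1)%R : nat)%:R else 1.
Definition G2 (R : realFieldType) (U : finType) (p1 p2 : R) (v x : U) (k : 'I_3) : R :=
  if x == v then ((hval p1 p2 k < p2)%R : nat)%:R else 1.
Definition H (R : realFieldType) (T : finType) (a t : T) (b : bool) : R :=
  if t == a then (b : nat)%:R else 1.

Lemma prod_pred1 (R : realFieldType) (T : finType) (v : T) (c : T -> R) :
  \prod_x (if x == v then c x else 1) = c v.
Proof. by rewrite -big_mkcond big_pred1_eq. Qed.

Lemma I1_PF (R : realFieldType) (U T1 T2 : finType) (key1 : T1 -> U)
  (p1 p2 : R) (t1 : T1) (w : Omega U T1 T2) :
  I1 key1 p1 p2 t1 w = PF (G1 p1 p2 (key1 t1)) (@H R T1 t1) (fun _ _ => 1) w.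
Proof.
rewrite /I1 /PF /G1 /H prod_pred1 prod_pred1 big1_eq mulr1 inE.
by case: (_ < _); case: (w.1.2 t1); rewrite /= ?mulr1 ?mul1r ?mulr0 ?mul0r.
Qed.

Lemma I2_PF (R : realFieldType) (U T1 T2 : finType) (key2 : T2 -> U)
  (p1 p2 : R) (t2 : T2) (w : Omega U T1 T2) :
  I2 key2 p1 p2 t2 w = PF (G2 p1 p2 (key2 t2)) (fun _ _ => 1) (@H R T2 t2) w.
Proof.
rewrite /I2 /PF /G2 /H prod_pred1 prod_pred1 big1_eq mulr1 inE.
by case: (_ < _); case: (w.2 t2); rewrite /= ?mulr1 ?mul1r ?mulr0 ?mul0r.
Qed.

Lemma PF_mul (R : realFieldType) (U T1 T2 : finType) (g g' : U -> 'I_3 -> R)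
  (h1 h1' : T1 -> bool -> R) (h2 h2' : T2 -> bool -> R) w :
  PF g h1 h2 w * PF g' h1' h2' w =
  PF (fun x k => g x k * g' x k) (fun t b => h1 t b * h1' t b)
     (fun t b => h2 t b * h2' t b) w.
Proof. by rewrite /PF !big_split /=; ring. Qed.

Lemma prod2 (R : realFieldType) (T : finType) (v u : T) (c : R) :
  \prod_x (if (x == v) || (x == u) then c else 1) = if v == u then c else c * c.
Proof.
case: eqP => [<-|ne].
  by under eq_bigr do rewrite orbb; rewrite (prod_pred1 v (fun=> c)).
transitivity (\prod_x ((if x == v then c else 1) * (if x == u then c else 1))).
  2: by rewrite big_split /= (prod_pred1 v (fun=> c)) (prod_pred1 u (fun=> c)).
apply: eq_bigr => x _.
have [xv|xv] := eqVneq x v; have [xu|xu] := eqVneq x u; rewrite /= ?mulr1 ?mul1r //.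
by case: ne; rewrite -xv -xu.
Qed.

Lemma hsum (R : realFieldType) (U : finType) (p1 p2 : R) (v u x : U) :
  0 < p1 -> 0 < p2 ->
  \sum_k hweight p1 p2 k * (G1 p1 p2 v x k * G2 p1 p2 v x k * G1 p1 p2 u x k * G2 p1 p2 u x k)
  = if (x == v) || (x == u) then Num.min p1 p2 else 1.
Proof.
move=> hp1 hp2.
rewrite !big_ord_recl big_ord0 /G1 /G2 /hweight /hval /= hp1 hp2.
rewrite /Num.Def.minr /Num.Def.maxr.
have [lt|gt|eq] := ltgtP p1 p2.
- rewrite ltxx lt (lt_gtF lt).
  by case: (x == v); case: (x == u); rewrite /= ?mulr0 ?mulr1 ?mul0r ?addr0; ring.
- rewrite ltxx gt (lt_gtF gt).
  by case: (x == v); case: (x == u); rewrite /= ?mulr0 ?mulr1 ?mul0r ?addr0; ring.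
- rewrite -eq ltxx.
  by case: (x == v); case: (x == u); rewrite /= ?mulr0 ?mulr1 ?mul0r ?addr0; ring.
Qed.

Lemma csum (R : realFieldType) (T : finType) (a c t : T) (q : R) :
  \sum_b coinw q b * (H R a t b * H R c t b) = if (t == a) || (t == c) then q else 1.
Proof.
rewrite big_bool /coinw /H.
by case: (t == a); case: (t == c); rewrite /= ?mulr0 ?mulr1 ?mul0r ?addr0; ring.
Qed.

Lemma eq_Expect (R : realFieldType) (U T1 T2 : finType) (p1 q1 p2 q2 : R)
  (f g : Omega U T1 T2 -> R) : (forall w, f w = g w) ->
  Expect p1 q1 p2 q2 f = Expect p1 q1 p2 q2 g.
Proof. by move=> e; apply: eq_bigr => w _; rewrite e. Qed.

Lemma E_quad (R : realFieldType) (U T1 T2 : finType) (key1 : T1 -> U) (key2 : T2 -> U)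
  (p1 q1 p2 q2 : R) (t1 s1 : T1) (t2 s2 : T2) :
  0 < p1 -> 0 < p2 -> key1 t1 = key2 t2 -> key1 s1 = key2 s2 ->
  Expect p1 q1 p2 q2 (fun w => I1 key1 p1 p2 t1 w * I2 key2 p1 p2 t2 w *
                               I1 key1 p1 p2 s1 w * I2 key2 p1 p2 s2 w) =
  (if key2 t2 == key2 s2 then Num.min p1 p2 else Num.min p1 p2 * Num.min p1 p2) *
  (if t1 == s1 then q1 else q1 * q1) * (if t2 == s2 then q2 else q2 * q2).
Proof.
move=> hp1 hp2 e1 e2.
eapply eq_trans.
  apply: eq_Expect => w.
  rewrite (I1_PF key1 p1 p2 t1) (I1_PF key1 p1 p2 s1) (I2_PF key2 p1 p2 t2) (I2_PF key2 p1 p2 s2) !PF_mul.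
  reflexivity.
rewrite Expect_PF e1 e2.
under eq_bigr do rewrite hsum //.
under [X in _ * X * _]eq_bigr do under eq_bigr do rewrite !mulr1.
under [X in _ * X]eq_bigr do under eq_bigr do rewrite !mulr1 mul1r.
under [X in _ * X * _]eq_bigr do rewrite csum.
under [X in _ * X]eq_bigr do rewrite csum.
by rewrite !prod2.
Qed.

Lemma E_one (R : realFieldType) (U T1 T2 : finType) (p1 q1 p2 q2 : R) :
  @Expect R U T1 T2 p1 q1 p2 q2 (fun _ => 1) = 1.
Proof.
rewrite (@eq_Expect _ _ _ _ _ _ _ _ _ (PF (fun _ _ => 1) (fun _ _ => 1) (fun _ _ => 1))).
  rewrite Expect_PF.
  under eq_bigr do under eq_bigr do rewrite mulr1.
  under [X in _ * X * _]eq_bigr do under eq_bigr do rewrite mulr1.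
  under [X in _ * X]eq_bigr do under eq_bigr do rewrite mulr1.
  rewrite !big_bool /coinw !big_ord_recl big_ord0 /hweight /=.
  rewrite big1 => [|i _]; last by ring.
  rewrite big1 => [|i _]; last by ring.
  rewrite big1 => [|i _]; last by ring.
  by rewrite !mulr1.
by move=> w; rewrite /PF !big1_eq !mulr1.
Qed.

Lemma Expect_sum (R : realFieldType) (U T1 T2 : finType) (p1 q1 p2 q2 : R)
  (I : finType) (F : I -> Omega U T1 T2 -> R) :
  Expect p1 q1 p2 q2 (fun w => \sum_i F i w) = \sum_i Expect p1 q1 p2 q2 (F i).
Proof.
rewrite /Expect exchange_big /=; apply: eq_bigr => w _; by rewrite mulr_sumr.
Qed.

Lemma ExpectZ (R : realFieldType) (U T1 T2 : finType) (p1 q1 p2 q2 : R)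
  (c : R) (F : Omega U T1 T2 -> R) :
  Expect p1 q1 p2 q2 (fun w => c * F w) = c * Expect p1 q1 p2 q2 F.
Proof.
rewrite /Expect mulr_sumr; apply: eq_bigr => w _; ring.
Qed.

Lemma ExpectD (R : realFieldType) (U T1 T2 : finType) (p1 q1 p2 q2 : R)
  (F G : Omega U T1 T2 -> R) :
  Expect p1 q1 p2 q2 (fun w => F w + G w) = Expect p1 q1 p2 q2 F + Expect p1 q1 p2 q2 G.
Proof.
rewrite /Expect -big_split; apply: eq_bigr => w _ /=; ring.
Qed.

Lemma js_sum (R : realFieldType) (U T1 T2 : finType) (key1 : T1 -> U) (key2 : T2 -> U)
  (p1 p2 : R) (w : Omega U T1 T2) :
  (join_size key1 key2 p1 p2 w)%:R =
  \sum_t1 \sum_t2 ((key1 t1 == key2 t2) : nat)%:R * (I1 key1 p1 p2 t1 w * I2 key2 p1 p2 t2 w) :> R.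
Proof.
rewrite pair_bigA /= /join_size -sum1_card big_mkcond natr_sum /=.
apply: eq_bigr => [[t1 t2]] _ /=; rewrite inE /= /I1 /I2.
case: (t1 \in S1 key1 p1 p2 w); case: (t2 \in S2 key2 p1 p2 w); case: (key1 t1 == key2 t2); by rewrite /= ?mulr0 ?mulr1 ?mul0r ?mul1r.
Qed.

Lemma E_pair (R : realFieldType) (U T1 T2 : finType) (key1 : T1 -> U) (key2 : T2 -> U)
  (p1 q1 p2 q2 : R) (t1 : T1) (t2 : T2) :
  0 < p1 -> 0 < p2 -> key1 t1 = key2 t2 ->
  Expect p1 q1 p2 q2 (fun w => I1 key1 p1 p2 t1 w * I2 key2 p1 p2 t2 w) =
  Num.min p1 p2 * q1 * q2.
Proof.
move=> hp1 hp2 e.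
rewrite (@eq_Expect _ _ _ _ _ _ _ _ _ (fun w => I1 key1 p1 p2 t1 w * I2 key2 p1 p2 t2 w *
                               I1 key1 p1 p2 t1 w * I2 key2 p1 p2 t2 w)).
  by rewrite E_quad // !eqxx.
move=> w; rewrite /I1 /I2.
by case: (t1 \in _); case: (t2 \in _); rewrite /= ?mulr0 ?mulr1 ?mul0r ?mul1r.
Qed.

Definition N (R : realFieldType) (U T1 T2 : finType) (key1 : T1 -> U) (key2 : T2 -> U)
  (t1 : T1) (t2 : T2) : R := ((key1 t1 == key2 t2) : nat)%:R.

Lemma mean_formula (R : realFieldType) (U T1 T2 : finType) (key1 : T1 -> U) (key2 : T2 -> U)
  (p1 q1 p2 q2 : R) :
  0 < p1 -> 0 < p2 -> 0 < q1 -> 0 < q2 ->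
  Expect p1 q1 p2 q2 (Jcount key1 key2 p1 q1 p2 q2) =
  \sum_t1 \sum_t2 N R key1 key2 t1 t2.
Proof.
move=> hp1 hp2 hq1 hq2.
have hm : 0 < Num.min p1 p2 by rewrite /Num.Def.minr; case: ifP.
rewrite (@eq_Expect _ _ _ _ _ _ _ _ _ (fun w => (Num.min p1 p2 * q1 * q2)^-1 *
  \sum_t1 \sum_t2 N R key1 key2 t1 t2 * (I1 key1 p1 p2 t1 w * I2 key2 p1 p2 t2 w))).
  rewrite ExpectZ Expect_sum mulr_sumr; apply: eq_bigr => t1 _.
  rewrite Expect_sum mulr_sumr; apply: eq_bigr => t2 _.
  rewrite ExpectZ /N; case: eqP => e; last by rewrite /= !mul0r mulr0.
  rewrite E_pair // /= mul1r mulVf //.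
  by rewrite !mulf_neq0 // gt_eqF.
by move=> w; rewrite /Jcount js_sum mulrC.
Qed.

Definition F (R : realFieldType) (U T1 T2 : finType) (key2 : T2 -> U)
  (m q1 q2 : R) (t1 s1 : T1) (t2 s2 : T2) : R :=
  (if key2 t2 == key2 s2 then m^-1 else 1) * (if t1 == s1 then q1^-1 else 1) *
  (if t2 == s2 then q2^-1 else 1).

Lemma second_formula (R : realFieldType) (U T1 T2 : finType) (key1 : T1 -> U) (key2 : T2 -> U)
  (p1 q1 p2 q2 : R) :
  0 < p1 -> 0 < p2 -> 0 < q1 -> 0 < q2 ->
  Expect p1 q1 p2 q2 (fun w => Jcount key1 key2 p1 q1 p2 q2 w ^+ 2) =
  \sum_t1 \sum_t2 \sum_s1 \sum_s2 N R key1 key2 t1 t2 * N R key1 key2 s1 s2 *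
     F key2 (Num.min p1 p2) q1 q2 t1 s1 t2 s2.
Proof.
move=> hp1 hp2 hq1 hq2.
have hm : 0 < Num.min p1 p2 by rewrite /Num.Def.minr; case: ifP.
have hm0 : Num.min p1 p2 != 0 by rewrite gt_eqF.
have hq10 : q1 != 0 by rewrite gt_eqF.
have hq20 : q2 != 0 by rewrite gt_eqF.
rewrite (@eq_Expect _ _ _ _ _ _ _ _ _ (fun w => ((Num.min p1 p2 * q1 * q2)^-1)^+2 *
  \sum_t1 \sum_t2 \sum_s1 \sum_s2 (N R key1 key2 t1 t2 * N R key1 key2 s1 s2) *
   (I1 key1 p1 p2 t1 w * I2 key2 p1 p2 t2 w * I1 key1 p1 p2 s1 w * I2 key2 p1 p2 s2 w))).
  rewrite ExpectZ Expect_sum mulr_sumr; apply: eq_bigr => t1 _.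
  rewrite Expect_sum mulr_sumr; apply: eq_bigr => t2 _.
  rewrite Expect_sum mulr_sumr; apply: eq_bigr => s1 _.
  rewrite Expect_sum mulr_sumr; apply: eq_bigr => s2 _.
  rewrite ExpectZ /N; case: eqP => e; last by rewrite /= !mul0r mulr0.
  case: eqP => e'; last by rewrite /= !mulr0 !mul0r mulr0.
  rewrite E_quad // /F /= !mul1r.
  move: hm0; set m := Num.min p1 p2 => hm0.
  case: (key2 t2 == key2 s2); case: (t1 == s1); case: (t2 == s2); field; by rewrite hq10 hq20 hm0.
move=> w; rewrite /Jcount js_sum.
rewrite exprMn mulrC /N; congr (_ * _); rewrite expr2.
rewrite big_distrl; apply: eq_bigr => t1 _.
rewrite big_distrl; apply: eq_bigr => t2 _.
rewrite big_distrr; apply: eq_bigr => s1 _.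
rewrite big_distrr; apply: eq_bigr => s2 _ /=.
ring.
Qed.

Lemma Var_formula (R : realFieldType) (U T1 T2 : finType) (key1 : T1 -> U) (key2 : T2 -> U)
  (p1 q1 p2 q2 : R) :
  0 < p1 -> 0 < p2 -> 0 < q1 -> 0 < q2 ->
  Var_Jcount key1 key2 p1 q1 p2 q2 =
  \sum_t1 \sum_t2 \sum_s1 \sum_s2 N R key1 key2 t1 t2 * N R key1 key2 s1 s2 *
     F key2 (Num.min p1 p2) q1 q2 t1 s1 t2 s2
  - (\sum_t1 \sum_t2 N R key1 key2 t1 t2) ^+ 2.
Proof.
move=> hp1 hp2 hq1 hq2.
rewrite /Var_Jcount /=.
set X := Jcount key1 key2 p1 q1 p2 q2.
set mu := Expect p1 q1 p2 q2 X.
rewrite (@eq_Expect _ _ _ _ _ _ _ _ _ (fun w => (X w ^+ 2 + (- 2 * mu) * X w) + mu ^+ 2 * 1)).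
  rewrite !ExpectD !ExpectZ E_one second_formula // -/mu.
  rewrite /mu /X mean_formula //; ring.
by move=> w; ring.
Qed.

Theorem lemma2 (R : realFieldType) (U T1 T2 : finType)
  (key1 : T1 -> U) (key2 : T2 -> U) (p1 q1 eps2 : R) :
  0 < p1 <= 1 -> 0 < q1 <= 1 -> 0 < eps2 <= 1 -> eps2 <= p1 ->
  forall p2 : R, eps2 <= p2 <= 1 ->
    Var_Jcount key1 key2 p1 q1 p1 (eps2 / p1)
      <= Var_Jcount key1 key2 p1 q1 p2 (eps2 / p2).
Proof.
move=> /andP[hp1 hp1'] /andP[hq1 hq1'] /andP[he he'] hep p2 /andP[hp2 hp2'].
have hp2p : 0 < p2 by apply: lt_le_trans hp2.
rewrite !Var_formula ?divr_gt0 //.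
rewrite lerD2r.
apply: ler_sum => t1 _; apply: ler_sum => t2 _; apply: ler_sum => s1 _; apply: ler_sum => s2 _.
apply: ler_wpM2l; first by rewrite /N mulr_ge0 ?ler0n.
rewrite /F.
have -> : Num.min p1 p1 = p1 by rewrite /Num.Def.minr ltxx.
set m := Num.min p1 p2.
have hm : 0 < m by rewrite /m /Num.Def.minr; case: ifP.
have hm1 : m <= p1.
  by rewrite /m /Num.Def.minr; case: ifP => [_|/negbT]; rewrite ?lexx // -leNgt.
have hm2 : m <= p2.
  by rewrite /m /Num.Def.minr; case: ifP => [/ltW|_] //.
set A := (if t1 == s1 then q1^-1 else 1).
have hA : 0 <= A by rewrite /A; case: ifP; rewrite ?invr_ge0 ?ltW.
rewrite (mulrAC _ A) (mulrAC _ A); apply: ler_wpM2r => //.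
have [ts|ts] := eqVneq t2 s2.
  rewrite ts eqxx !invf_div mulrA mulVf ?gt_eqF // mul1r.
  rewrite mulrA; apply: (@le_trans _ _ (1 * eps2^-1)); first by rewrite mul1r.
  apply: ler_wpM2r; first by rewrite invr_ge0 ltW.
  by rewrite mulrC ler_pdivlMr // mul1r.
rewrite ?(negbTE ts) !mulr1.
case: ifP => _ //.
by rewrite lef_pV2 ?posrE.
Qed.
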